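(* Let $\rho$ be a probability density on $\mathbb{R}$ supported on $[\alpha,\beta]$ with $0\le\alpha<\beta<\infty$, continuous and bounded on $[\alpha,\beta]$. Fix $\lambda\in(\alpha,\beta)$ with $\rho(\lambda)>0$ and assume $\rho$ is continuously differentiable on a neighborhood of $\lambda$. For each $p$ in an unbounded sequence of positive integers, let $0<\lambda^{(p)}_1<\lambda^{(p)}_2<\cdots<\lambda^{(p)}_p$ be simple eigenvalues, and let $i=i(p)$ be an index with $2\le i\le p-1$ and $\lambda^{(p)}_{i}=\lambda$. Write $s_i^{-}=\lambda_i^{(p)}-\lambda^{(p)}_{i-1}$, $s_i^{+}=\lambda^{(p)}_{i+1}-\lambda_i^{(p)}$, and $f_\lambda(x)=\lambda x/(\lambda-x)^2$. Assume: (i) there are constants $0<a<b$ such that $a\le p\,s_i^{\pm}\le b$ for all $p$; (ii) $\frac1p\sum_{j=1}^{i-2} f_\lambda(\lambda^{(p)}_j)-\int_\alpha^{\lambda-s_i^-}f_\lambda(x)\rho(x)\,dx=o(p)$ and $\frac1p\sum_{j=i+2}^{p} f_\lambda(\lambda^{(p)}_j)-\int_{\lambda+s_i^+}^{\beta}f_\lambda(x)\rho(x)\,dx=o(p)$ as $p\to\infty$. Let $h_i=\sum_{j\ne i}\frac{\lambda_i\lambda_j}{(\lambda_i-\lambda_j)^2}$ and $$\hat h_i=\lambda^2\left[\frac{1}{(s_i^-)^2}+\frac{1}{(s_i^+)^2}+p\rho(\lambda)\left(\frac1{s_i^-}+\frac1{s_i^+}\right)\right].$$ Then $h_i-\hat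 h_i=o(p^2)$ while $\hat h_i$ is of exact order $p^2$; in particular $h_i/\hat h_i\to1$ as $p\to\infty$.
   Context: This is the paper's large-$p$ approximation of the quantity $h_i$ appearing in the asymptotic expected eigenvector error $\mathbb{E}[n\|\bm u_i-\tilde{\bm u}_i\|^2]\to h_i$ for Wishart sample covariance matrices. Hypothesis (i) encodes that nearest-neighbour eigenvalue gaps are of order $1/(p\rho(\lambda))$; hypothesis (ii) encodes that the empirical spectral density converges to $\rho$ fast enough near $\lambda$. *)

(* Defs.v *)
From Stdlib Require Import Reals Lra Lia List.
Open Scope R_scope.

(* sumR m n f = f m + f (m+1) + ... + f n  (empty sum = 0 when n < m) *)
Definition sumR (m n : nat) (f : nat -> R) : R :=
  fold_right Rplus 0 (map f (seq m (S n - m))).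

Definition f_lam (lam x : R) : R := lam * x / (lam - x) ^ 2.

Definition h_i (p i : nat) (ev : nat -> R) : R :=
  sumR 1 p (fun j => if Nat.eq_dec j i then 0
                     else ev i * ev j / (ev i - ev j) ^ 2).

Definition hhat_i (p : nat) (lam rho_lam sm sp : R) : R :=
  lam ^ 2 * (1 / sm ^ 2 + 1 / sp ^ 2 + INR p * rho_lam * (1 / sm + 1 / sp)).

(* Main.v *)
Require Import Defs.
From Stdlib Require Import Reals List Lra Lia.
From Coquelicot Require Import Coquelicot.
Open Scope R_scope.

Lemma int_H (c lam a b : R) : a <= b -> (b < lam \/ lam < a) ->
  is_RInt (fun x => c / (lam - x)^2) a b (c / (lam - b) - c / (lam - a)).
Proof.
intros Hab Hl.
assert (Hne : forall x, Rmin a b <= x <= Rmax a b -> lam - x <> 0).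
{ intros x Hx. rewrite Rmin_left in Hx by lra. rewrite Rmax_right in Hx by lra. lra. }
replace (c / (lam - b) - c / (lam - a)) with (minus ((fun x => c / (lam - x)) b) ((fun x => c/(lam-x)) a)) by reflexivity.
apply (is_RInt_derive (fun x => c / (lam - x)) (fun x => c / (lam - x)^2)).
- intros x Hx. specialize (Hne x Hx). auto_derive. auto. field. auto.
- intros x Hx. specialize (Hne x Hx). apply (ex_derive_continuous (K:=R_AbsRing) (V:=R_NormedModule) (fun x => c / (lam - x)^2)). auto_derive. rewrite Rmult_1_r. apply Rmult_integral_contrapositive. auto.
Qed.

Lemma core_left (G F : R -> R) (lam A : R) :
  A < lam ->
  (forall x, F x = G x / (lam - x)^2) ->
  (forall eps, 0 < eps -> exists d, 0 < d /\ forall x, Rabs (x - lam) < d -> Rabs (G x - G lam) < eps) ->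
  forall eps, 0 < eps -> exists d, 0 < d /\ forall s, 0 < s < d -> ex_RInt F A (lam - s) ->
     Rabs (s * RInt F A (lam - s) - G lam) < eps.
Proof.
intros HA HF Hc eps Heps.
destruct (Hc (eps/2)) as [d0 [Hd0 Hd0']]; [lra|].
assert (Hmin1 := Rmin_l d0 (lam - A)). assert (Hmin2 := Rmin_r d0 (lam - A)).
assert (Hmin3 : 0 < Rmin d0 (lam - A)) by (apply Rmin_glb_lt; lra).
set (dl := Rmin d0 (lam - A) / 2).
assert (Hdl : 0 < dl /\ dl < d0 /\ dl < lam - A) by (unfold dl; lra).
set (K := RInt F A (lam - dl)). set (g := G lam).
set (M := Rabs K + Rabs g / dl + 1).
assert (HM : 0 < M) by (unfold M; assert (0 <= Rabs g / dl) by (apply Rdiv_le_0_compat; [apply Rabs_pos|lra]); pose proof (Rabs_pos K); lra).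
exists (Rmin dl (eps/2/M)). split.
{ apply Rmin_glb_lt; [lra|]. apply Rdiv_lt_0_compat; lra. }
intros s [Hs1 Hs2] Hex.
assert (Hsdl : s < dl) by (pose proof (Rmin_l dl (eps/2/M)); lra).
assert (HsM : s * M < eps/2).
{ assert (s < eps/2/M) by (pose proof (Rmin_r dl (eps/2/M)); lra).
  apply (Rmult_lt_compat_r M) in H; [|lra]. unfold Rdiv in H |- *.
  rewrite Rmult_assoc, Rinv_l in H; lra. }
assert (HexK : ex_RInt F A (lam - dl)) by (apply (ex_RInt_Chasles_1 F A (lam-dl) (lam-s)); [lra|exact Hex]).
assert (HexJ : ex_RInt F (lam - dl) (lam - s)) by (apply (ex_RInt_Chasles_2 F A (lam-dl) (lam-s)); [lra|exact Hex]).
rewrite <- (RInt_Chasles F A (lam-dl) (lam-s) HexK HexJ).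
change (plus (RInt F A (lam - dl)) (RInt F (lam - dl) (lam - s))) with (K + RInt F (lam - dl) (lam - s)).
set (J := RInt F (lam - dl) (lam - s)).
set (e := eps/2).
assert (Hpt : forall x, lam - dl < x < lam - s ->
   (g - e) / (lam - x)^2 <= F x <= (g + e) / (lam - x)^2).
{ intros x Hx. rewrite HF. assert (Hp : 0 < / (lam - x)^2).
  { apply Rinv_0_lt_compat. apply pow_lt. lra. }
  assert (Hg : Rabs (G x - g) < e) by (apply Hd0'; rewrite Rabs_left by lra; lra).
  apply Rabs_def2 in Hg. unfold Rdiv. split; apply Rmult_le_compat_r; lra. }
assert (Hlo := int_H (g - e) lam (lam - dl) (lam - s) ltac:(lra) ltac:(lra)).
assert (Hhi := int_H (g + e) lam (lam - dl) (lam - s) ltac:(lra) ltac:(lra)).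
assert (HJlo : (g - e) / (lam - (lam - s)) - (g - e) / (lam - (lam - dl)) <= J).
{ rewrite <- (is_RInt_unique _ _ _ _ Hlo). apply RInt_le; [lra| eexists; exact Hlo | exact HexJ |].
  intros x Hx; apply Hpt; exact Hx. }
assert (HJhi : J <= (g + e) / (lam - (lam - s)) - (g + e) / (lam - (lam - dl))).
{ rewrite <- (is_RInt_unique _ _ _ _ Hhi). apply RInt_le; [lra| exact HexJ | eexists; exact Hhi |].
  intros x Hx; apply Hpt; exact Hx. }
set (u := s / dl).
assert (Hu : 0 < u < 1).
{ unfold u; split; [apply Rdiv_lt_0_compat; lra|]. apply (Rmult_lt_reg_r dl); [lra|].
  unfold Rdiv; rewrite Rmult_assoc, Rinv_l; lra. }
assert (E1 : s * ((g - e) / (lam - (lam - s)) - (g - e) / (lam - (lam - dl))) = (g - e) * (1 - u))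
  by (unfold u; field; lra).
assert (E2 : s * ((g + e) / (lam - (lam - s)) - (g + e) / (lam - (lam - dl))) = (g + e) * (1 - u))
  by (unfold u; field; lra).
assert (H1 : (g - e) * (1 - u) <= s * J) by (rewrite <- E1; apply Rmult_le_compat_l; lra).
assert (H2 : s * J <= (g + e) * (1 - u)) by (rewrite <- E2; apply Rmult_le_compat_l; lra).
assert (H3 : Rabs (s * K) = s * Rabs K) by (rewrite Rabs_mult, Rabs_pos_eq; lra).
assert (H4 : s * Rabs K + Rabs g * u < e).
{ unfold M in HsM. unfold u. replace (Rabs g * (s / dl)) with (s * (Rabs g / dl)) by (field; lra). rewrite !Rmult_plus_distr_l in HsM. fold e in HsM. lra. }
assert (H5 : - (Rabs g * u) <= g * u <= Rabs g * u).
{ split; [|apply Rmult_le_compat_r; [lra| apply Rle_abs]].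
  pose proof (Rabs_pos g). unfold Rabs in *. destruct (Rcase_abs g); nra. }
assert (H6 : 0 <= e * u <= e) by (split; nra).
assert (HsK1 := Rle_abs (s*K)). assert (HsK2 := Rle_abs (-(s*K))). rewrite Rabs_Ropp, H3 in HsK2. rewrite H3 in HsK1.
replace (s * (K + J) - g) with (s * K + (s * J - g)) by ring.
assert (Eeps : eps = 2 * e) by (unfold e; field). replace ((g - e) * (1 - u)) with (g - g*u - e + e*u) in H1 by ring. replace ((g + e) * (1 - u)) with (g - g*u + e - e*u) in H2 by ring. apply Rabs_def1; lra.
Qed.

Lemma core_right (G F : R -> R) (lam A : R) :
  lam < A ->
  (forall x, F x = G x / (lam - x)^2) ->
  (forall eps, 0 < eps -> exists d, 0 < d /\ forall x, Rabs (x - lam) < d -> Rabs (G x - G lam) < eps) ->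
  forall eps, 0 < eps -> exists d, 0 < d /\ forall s, 0 < s < d -> ex_RInt F (lam + s) A ->
     Rabs (s * RInt F (lam + s) A - G lam) < eps.
Proof.
intros HA HF Hc eps Heps.
destruct (Hc (eps/2)) as [d0 [Hd0 Hd0']]; [lra|].
assert (Hmin1 := Rmin_l d0 (A - lam)). assert (Hmin2 := Rmin_r d0 (A - lam)).
assert (Hmin3 : 0 < Rmin d0 (A - lam)) by (apply Rmin_glb_lt; lra).
set (dl := Rmin d0 (A - lam) / 2).
assert (Hdl : 0 < dl /\ dl < d0 /\ dl < A - lam) by (unfold dl; lra).
set (K := RInt F (lam + dl) A). set (g := G lam).
set (M := Rabs K + Rabs g / dl + 1).
assert (HM : 0 < M) by (unfold M; assert (0 <= Rabs g / dl) by (apply Rdiv_le_0_compat; [apply Rabs_pos|lra]); pose proof (Rabs_pos K); lra).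
exists (Rmin dl (eps/2/M)). split.
{ apply Rmin_glb_lt; [lra|]. apply Rdiv_lt_0_compat; lra. }
intros s [Hs1 Hs2] Hex.
assert (Hsdl : s < dl) by (pose proof (Rmin_l dl (eps/2/M)); lra).
assert (HsM : s * M < eps/2).
{ assert (s < eps/2/M) by (pose proof (Rmin_r dl (eps/2/M)); lra).
  apply (Rmult_lt_compat_r M) in H; [|lra]. unfold Rdiv in H |- *.
  rewrite Rmult_assoc, Rinv_l in H; lra. }
assert (HexK : ex_RInt F (lam + dl) A) by (apply (ex_RInt_Chasles_2 F (lam+s) (lam+dl) A); [lra|exact Hex]).
assert (HexJ : ex_RInt F (lam + s) (lam + dl)) by (apply (ex_RInt_Chasles_1 F (lam+s) (lam+dl) A); [lra|exact Hex]).
rewrite <- (RInt_Chasles F (lam+s) (lam+dl) A HexJ HexK).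
change (plus (RInt F (lam + s) (lam + dl)) (RInt F (lam + dl) A)) with (RInt F (lam + s) (lam + dl) + K).
set (J := RInt F (lam + s) (lam + dl)).
set (e := eps/2).
assert (Hpt : forall x, lam + s < x < lam + dl ->
   (g - e) / (lam - x)^2 <= F x <= (g + e) / (lam - x)^2).
{ intros x Hx. rewrite HF. assert (Hp : 0 < / (lam - x)^2).
  { apply Rinv_0_lt_compat. simpl; rewrite Rmult_1_r; nra. }
  assert (Hg : Rabs (G x - g) < e) by (apply Hd0'; rewrite Rabs_right by lra; lra).
  apply Rabs_def2 in Hg. unfold Rdiv. split; apply Rmult_le_compat_r; lra. }
assert (Hlo := int_H (g - e) lam (lam + s) (lam + dl) ltac:(lra) ltac:(lra)).
assert (Hhi := int_H (g + e) lam (lam + s) (lam + dl) ltac:(lra) ltac:(lra)).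
assert (HJlo : (g - e) / (lam - (lam + dl)) - (g - e) / (lam - (lam + s)) <= J).
{ rewrite <- (is_RInt_unique _ _ _ _ Hlo). apply RInt_le; [lra| eexists; exact Hlo | exact HexJ |].
  intros x Hx; apply Hpt; exact Hx. }
assert (HJhi : J <= (g + e) / (lam - (lam + dl)) - (g + e) / (lam - (lam + s))).
{ rewrite <- (is_RInt_unique _ _ _ _ Hhi). apply RInt_le; [lra| exact HexJ | eexists; exact Hhi |].
  intros x Hx; apply Hpt; exact Hx. }
set (u := s / dl).
assert (Hu : 0 < u < 1).
{ unfold u; split; [apply Rdiv_lt_0_compat; lra|]. apply (Rmult_lt_reg_r dl); [lra|].
  unfold Rdiv; rewrite Rmult_assoc, Rinv_l; lra. }
assert (E1 : s * ((g - e) / (lam - (lam + dl)) - (g - e) / (lam - (lam + s))) = (g - e) * (1 - u))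
  by (unfold u; field; lra).
assert (E2 : s * ((g + e) / (lam - (lam + dl)) - (g + e) / (lam - (lam + s))) = (g + e) * (1 - u))
  by (unfold u; field; lra).
assert (H1 : (g - e) * (1 - u) <= s * J) by (rewrite <- E1; apply Rmult_le_compat_l; lra).
assert (H2 : s * J <= (g + e) * (1 - u)) by (rewrite <- E2; apply Rmult_le_compat_l; lra).
assert (H3 : Rabs (s * K) = s * Rabs K) by (rewrite Rabs_mult, Rabs_pos_eq; lra).
assert (H4 : s * Rabs K + Rabs g * u < e).
{ unfold M in HsM. unfold u. replace (Rabs g * (s / dl)) with (s * (Rabs g / dl)) by (field; lra). rewrite !Rmult_plus_distr_l in HsM. fold e in HsM. lra. }
assert (H5 : - (Rabs g * u) <= g * u <= Rabs g * u).
{ split; [|apply Rmult_le_compat_r; [lra| apply Rle_abs]].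
  pose proof (Rabs_pos g). unfold Rabs in *. destruct (Rcase_abs g); nra. }
assert (H6 : 0 <= e * u <= e) by (split; nra).
assert (HsK1 := Rle_abs (s*K)). assert (HsK2 := Rle_abs (-(s*K))). rewrite Rabs_Ropp, H3 in HsK2. rewrite H3 in HsK1.
replace (s * (J + K) - g) with (s * K + (s * J - g)) by ring.
assert (Eeps : eps = 2 * e) by (unfold e; field). replace ((g - e) * (1 - u)) with (g - g*u - e + e*u) in H1 by ring. replace ((g + e) * (1 - u)) with (g - g*u + e - e*u) in H2 by ring. apply Rabs_def1; lra.
Qed.

Lemma fold_app (l1 l2 : list R) :
  fold_right Rplus 0 (l1 ++ l2) = fold_right Rplus 0 l1 + fold_right Rplus 0 l2.
Proof. induction l1 as [|x l IH]; simpl; [ring| rewrite IH; ring]. Qed.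

Lemma sumR_split m k n f : (m <= S k)%nat -> (k <= n)%nat ->
  sumR m n f = sumR m k f + sumR (S k) n f.
Proof.
intros H1 H2. unfold sumR.
replace (S n - m)%nat with ((S k - m) + (S n - S k))%nat by lia.
rewrite seq_app, map_app, fold_app.
replace (m + (S k - m))%nat with (S k) by lia. reflexivity.
Qed.

Lemma sumR_one k f : sumR k k f = f k.
Proof. unfold sumR. replace (S k - k)%nat with 1%nat by lia. simpl. ring. Qed.

Lemma sumR_ext m n f g : (forall j, (m <= j <= n)%nat -> f j = g j) -> sumR m n f = sumR m n g.
Proof.
intros H. unfold sumR. f_equal. apply map_ext_in. intros j Hj. apply in_seq in Hj. apply H. lia.
Qed.

Lemma Un_cv_ext (u v : nat -> R) l : (forall n, u n = v n) -> Un_cv u l -> Un_cv v l.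
Proof. intros H Hu eps He. destruct (Hu eps He) as [N HN]. exists N. intros n Hn. rewrite <- H. auto. Qed.

Lemma cv0_bdd (u v : nat -> R) K : Un_cv u 0 -> (forall n, Rabs (v n) <= K) ->
  Un_cv (fun n => u n * v n) 0.
Proof.
intros Hu Hv eps He.
assert (HK : 0 <= K) by (specialize (Hv O); pose proof (Rabs_pos (v O)); lra).
destruct (Hu (eps / (K + 1))) as [N HN]. { apply Rdiv_lt_0_compat; lra. }
exists N. intros n Hn. specialize (HN n Hn). unfold R_dist in *. rewrite Rminus_0_r in *.
rewrite Rabs_mult. specialize (Hv n).
apply Rle_lt_trans with (Rabs (u n) * (K + 1)).
{ apply Rmult_le_compat_l; [apply Rabs_pos| lra]. }
apply (Rmult_lt_compat_r (K+1)) in HN; [|lra].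
unfold Rdiv in HN. rewrite Rmult_assoc, Rinv_l in HN; lra.
Qed.

Lemma cv0_plus (u v : nat -> R) : Un_cv u 0 -> Un_cv v 0 -> Un_cv (fun n => u n + v n) 0.
Proof. intros Hu Hv. replace 0 with (0 + 0) by ring. apply CV_plus; auto. Qed.

Lemma cv_shift (u : nat -> R) l : Un_cv u 0 -> Un_cv (fun n => l + u n) l.
Proof. intros Hu eps He. destruct (Hu eps He) as [N HN]. exists N. intros n Hn.
specialize (HN n Hn). unfold R_dist in *. replace (l + u n - l) with (u n - 0) by ring. exact HN. Qed.
Theorem mainTheorem1
  (rho : R -> R) (alpha beta lam : R)
  (* support and density assumptions *)
  (Halpha : 0 <= alpha) (Hab : alpha < beta)
  (Hnonneg : forall x, 0 <= rho x)
  (Hsupp : forall x, (x < alpha \/ beta < x) -> rho x = 0)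
  (Hmass : exists pr : Riemann_integrable rho alpha beta, RiemannInt pr = 1)
  (Hcont : forall x, alpha <= x <= beta ->
             limit1_in rho (fun y => alpha <= y <= beta) (rho x) x)
  (Hbdd : exists M, forall x, Rabs (rho x) <= M)
  (* the point lambda *)
  (Hlam : alpha < lam < beta) (Hrholam : 0 < rho lam)
  (HC1 : exists delta, 0 < delta /\ exists rho' : R -> R,
           (forall x, Rabs (x - lam) < delta -> derivable_pt_lim rho x (rho' x)) /\
           (forall x, Rabs (x - lam) < delta -> continuity_pt rho' x))
  (* the sequence of dimensions p_n -> infinity *)
  (p : nat -> nat) (Hppos : forall n, (0 < p n)%nat)
  (Hpinf : forall M : nat, exists N, forall n, (N <= n)%nat -> (M <= p n)%nat)
  (* eigenvalues ev n j, j = 1..p n, simple, positive, increasing *)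
  (ev : nat -> nat -> R)
  (Hevpos : forall n, 0 < ev n 1%nat)
  (Hevinc : forall n j, (1 <= j)%nat -> (j < p n)%nat -> ev n j < ev n (S j))
  (* the index i = i(p) *)
  (i : nat -> nat)
  (Hi : forall n, (2 <= i n)%nat /\ (i n <= p n - 1)%nat)
  (Hevi : forall n, ev n (i n) = lam)
  (* hypothesis (i) *)
  (a b : R) (Ha : 0 < a) (Hab' : a < b)
  (Hgap : forall n,
     a <= INR (p n) * (ev n (i n) - ev n (pred (i n))) <= b /\
     a <= INR (p n) * (ev n (S (i n)) - ev n (i n)) <= b)
  (* hypothesis (ii) *)
  (Hii : exists IL IR : nat -> R,
     (forall n, exists pr : Riemann_integrable (fun x => f_lam lam x * rho x)
                              alpha (lam - (ev n (i n) - ev n (pred (i n)))),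
                  RiemannInt pr = IL n) /\
     (forall n, exists pr : Riemann_integrable (fun x => f_lam lam x * rho x)
                              (lam + (ev n (S (i n)) - ev n (i n))) beta,
                  RiemannInt pr = IR n) /\
     Un_cv (fun n => (/ INR (p n) * sumR 1 (i n - 2) (fun j => f_lam lam (ev n j))
                        - IL n) / INR (p n)) 0 /\
     Un_cv (fun n => (/ INR (p n) * sumR (i n + 2) (p n) (fun j => f_lam lam (ev n j))
                        - IR n) / INR (p n)) 0) :
  let hh := fun n => h_i (p n) (i n) (ev n) in
  let hhat := fun n => hhat_i (p n) lam (rho lam)
                 (ev n (i n) - ev n (pred (i n))) (ev n (S (i n)) - ev n (i n)) in
  Un_cv (fun n => (hh n - hhat n) / INR (p n) ^ 2) 0 /\
  (exists c C, 0 < c /\ 0 < C /\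
     forall n, c * INR (p n) ^ 2 <= hhat n <= C * INR (p n) ^ 2) /\
  Un_cv (fun n => hh n / hhat n) 1.
Proof.
intros hh hhat.
set (P := fun n => INR (p n)).
assert (HP : forall n, 0 < P n) by (intro n; unfold P; apply lt_0_INR; apply Hppos).
assert (HinvP : Un_cv (fun n => / P n) 0).
{ intros eps Heps. destruct (INR_unbounded (/eps)) as [M HM]. destruct (Hpinf M) as [N HN].
  exists N. intros n Hn. unfold R_dist. rewrite Rminus_0_r.
  rewrite Rabs_pos_eq by (left; apply Rinv_0_lt_compat; apply HP).
  specialize (HN n Hn). apply le_INR in HN. fold (P n) in HN.
  rewrite <- (Rinv_inv eps). apply Rinv_lt_contravar.
  - apply Rmult_lt_0_compat; [apply Rinv_0_lt_compat; lra| apply HP].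
  - lra. }
set (sm := fun n => ev n (i n) - ev n (pred (i n))).
set (sq := fun n => ev n (S (i n)) - ev n (i n)).
assert (Hgm : forall n, a <= P n * sm n <= b) by (intro n; apply (Hgap n)).
assert (Hgq : forall n, a <= P n * sq n <= b) by (intro n; apply (Hgap n)).
assert (Hsm : forall n, 0 < sm n).
{ intro n. specialize (Hgm n). specialize (HP n). destruct (Rle_or_lt (sm n) 0); [|auto].
  nra. }
assert (Hsq : forall n, 0 < sq n).
{ intro n. specialize (Hgq n). specialize (HP n). destruct (Rle_or_lt (sq n) 0); [nra|auto]. }
assert (Hsm0 : Un_cv sm 0).
{ apply (Un_cv_ext (fun n => / P n * (P n * sm n))).
  { intro n. field. apply Rgt_not_eq, HP. }
  apply (cv0_bdd _ _ b HinvP). intro n. specialize (Hgm n). rewrite Rabs_pos_eq; lra. }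
assert (Hsq0 : Un_cv sq 0).
{ apply (Un_cv_ext (fun n => / P n * (P n * sq n))).
  { intro n. field. apply Rgt_not_eq, HP. }
  apply (cv0_bdd _ _ b HinvP). intro n. specialize (Hgq n). rewrite Rabs_pos_eq; lra. }
set (SL := fun n => sumR 1 (i n - 2) (fun j => f_lam lam (ev n j))).
set (SR := fun n => sumR (i n + 2) (p n) (fun j => f_lam lam (ev n j))).
assert (Hdec : forall n, hh n = SL n + SR n + (lam^2 / sm n ^2 - lam / sm n) + (lam^2 / sq n ^2 + lam / sq n)).
{ intro n. assert (H1 := Hsm n). assert (H2 := Hsq n). unfold sm, sq in *.
  unfold hh, h_i, SL, SR. rewrite Hevi in *. destruct (Hi n) as [Hi1 Hi2]. pose proof (Hppos n).
  rewrite (sumR_split 1 (i n - 2) (p n)) by lia.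
  rewrite (sumR_split (S (i n - 2)) (S (i n - 2)) (p n)) by lia. rewrite sumR_one.
  rewrite (sumR_split (S (S (i n - 2))) (S (S (i n - 2))) (p n)) by lia. rewrite sumR_one.
  rewrite (sumR_split (S (S (S (i n - 2)))) (S (S (S (i n - 2)))) (p n)) by lia. rewrite sumR_one.
  replace (S (S (S (S (i n - 2))))) with (i n + 2)%nat by lia.
  replace (S (S (S (i n - 2)))) with (S (i n)) by lia.
  replace (S (S (i n - 2))) with (i n) by lia.
  replace (S (i n - 2)) with (pred (i n)) by lia.
  destruct (Nat.eq_dec (pred (i n)) (i n)); [lia|].
  destruct (Nat.eq_dec (i n) (i n)); [|congruence].
  destruct (Nat.eq_dec (S (i n)) (i n)); [lia|].
  rewrite (sumR_ext 1 (i n - 2) _ (fun j => f_lam lam (ev n j))).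
  2:{ intros j Hj. destruct (Nat.eq_dec j (i n)); [lia|]. reflexivity. }
  rewrite (sumR_ext (i n + 2) (p n) _ (fun j => f_lam lam (ev n j))).
  2:{ intros j Hj. destruct (Nat.eq_dec j (i n)); [lia|]. reflexivity. }
  try rewrite Hevi.
  replace (ev n (pred (i n))) with (lam - (lam - ev n (pred (i n)))) by ring.
  replace (ev n (S (i n))) with (lam + (ev n (S (i n)) - lam)) by ring.
  field. split; lra. }
destruct Hii as [IL [IR [HIL [HIR [HTL HTR]]]]].
set (F := fun x => f_lam lam x * rho x).
set (G := fun x => lam * x * rho x).
assert (HFG : forall x, F x = G x / (lam - x)^2) by (intro x; unfold F, G, f_lam, Rdiv; ring).
assert (HGc : forall eps, 0 < eps -> exists d, 0 < d /\ forall x, Rabs (x - lam) < d -> Rabs (G x - G lam) < eps).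
{ destruct HC1 as [dl [Hdl [rho' [Hd _]]]].
  assert (Hder := Hd lam ltac:(rewrite Rminus_eq_0, Rabs_R0; exact Hdl)).
  assert (Hcr : continuity_pt rho lam) by exact (derivable_continuous_pt rho lam (exist _ _ Hder)).
  assert (HcG : continuity_pt G lam).
  { apply (continuity_pt_mult (fun x => lam * x) rho); [|exact Hcr].
    apply (continuity_pt_mult (fun _ => lam) id); [apply continuity_pt_const; intros u v; reflexivity | apply derivable_continuous_pt, derivable_pt_id]. }
  intros eps Heps. destruct (HcG eps Heps) as [d [Hd0 Hd1]]. exists d. split; [exact Hd0|].
  intros x Hx. destruct (Req_dec x lam) as [->|Hne].
  - rewrite Rminus_eq_0, Rabs_R0. exact Heps.
  - apply (Hd1 x). split; [split; [exact I| auto]| exact Hx]. }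
assert (HUL : Un_cv (fun n => sm n * IL n - G lam) 0).
{ intros eps Heps. destruct (core_left G F lam alpha ltac:(lra) HFG HGc eps Heps) as [d [Hd Hcore]].
  destruct (Hsm0 d Hd) as [N HN]. exists N. intros n Hn. unfold R_dist. rewrite Rminus_0_r.
  destruct (HIL n) as [pr Hpr]. rewrite <- Hpr, <- RInt_Reals.
  specialize (HN n Hn). unfold R_dist in HN. rewrite Rminus_0_r, Rabs_pos_eq in HN by (left; apply Hsm).
  exact (Hcore (sm n) (conj (Hsm n) HN) (ex_RInt_Reals_1 _ _ _ pr)). }
assert (HUR : Un_cv (fun n => sq n * IR n - G lam) 0).
{ intros eps Heps. destruct (core_right G F lam beta ltac:(lra) HFG HGc eps Heps) as [d [Hd Hcore]].
  destruct (Hsq0 d Hd) as [N HN]. exists N. intros n Hn. unfold R_dist. rewrite Rminus_0_r.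
  destruct (HIR n) as [pr Hpr]. rewrite <- Hpr, <- RInt_Reals.
  specialize (HN n Hn). unfold R_dist in HN. rewrite Rminus_0_r, Rabs_pos_eq in HN by (left; apply Hsq).
  exact (Hcore (sq n) (conj (Hsq n) HN) (ex_RInt_Reals_1 _ _ _ pr)). }
assert (Hbm : forall n, Rabs (/ (sm n * P n)) <= / a).
{ intro n. specialize (Hgm n). specialize (Hsm n). specialize (HP n).
  rewrite Rabs_pos_eq by (left; apply Rinv_0_lt_compat; nra).
  apply Rinv_le_contravar; lra. }
assert (Hbq : forall n, Rabs (/ (sq n * P n)) <= / a).
{ intro n. specialize (Hgq n). specialize (Hsq n). specialize (HP n).
  rewrite Rabs_pos_eq by (left; apply Rinv_0_lt_compat; nra).
  apply Rinv_le_contravar; lra. }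
assert (Part1 : Un_cv (fun n => (hh n - hhat n) / INR (p n) ^ 2) 0).
{ apply (Un_cv_ext (fun n =>
     (/ INR (p n) * sumR 1 (i n - 2) (fun j => f_lam lam (ev n j)) - IL n) / INR (p n)
   + (/ INR (p n) * sumR (i n + 2) (p n) (fun j => f_lam lam (ev n j)) - IR n) / INR (p n)
   + (sm n * IL n - G lam) * / (sm n * P n)
   + (sq n * IR n - G lam) * / (sq n * P n)
   + / P n * (lam * (- / (sm n * P n) + / (sq n * P n))))).
  { intro n. unfold hhat. rewrite Hdec. fold (P n). fold (sm n). fold (sq n). fold (SL n). fold (SR n).
    unfold hhat_i, G. fold (P n).
    assert (H1 := Hsm n). assert (H2 := Hsq n). assert (H3 := HP n). field. lra. }
  repeat apply cv0_plus.
  - exact HTL.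
  - exact HTR.
  - apply (cv0_bdd _ _ (/ a) HUL Hbm).
  - apply (cv0_bdd _ _ (/ a) HUR Hbq).
  - apply (cv0_bdd _ _ (lam * / a) HinvP). intro n.
    specialize (Hbm n). specialize (Hbq n).
    rewrite Rabs_pos_eq in Hbm by (left; apply Rinv_0_lt_compat; specialize (Hsm n); specialize (HP n); nra).
    rewrite Rabs_pos_eq in Hbq by (left; apply Rinv_0_lt_compat; specialize (Hsq n); specialize (HP n); nra).
    assert (0 < / (sm n * P n)) by (apply Rinv_0_lt_compat; specialize (Hsm n); specialize (HP n); nra).
    assert (0 < / (sq n * P n)) by (apply Rinv_0_lt_compat; specialize (Hsq n); specialize (HP n); nra).
    assert (0 < lam) by lra.
    apply Rabs_le. split; nra. }
assert (Hrho : 0 < rho lam) by exact Hrholam.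
set (c := lam^2 * (/b * /b + /b * /b + rho lam * (/b + /b))).
set (C := lam^2 * (/a * /a + /a * /a + rho lam * (/a + /a))).
assert (Hlam0 : 0 < lam) by lra.
assert (Hb0 : 0 < /b) by (apply Rinv_0_lt_compat; lra).
assert (Hc : 0 < c) by (unfold c; apply Rmult_lt_0_compat; [nra|]; nra).
assert (HC : 0 < C).
{ unfold C. assert (0 < /a) by (apply Rinv_0_lt_compat; lra). apply Rmult_lt_0_compat; [nra|]; nra. }
assert (Hbnd : forall n, c * INR (p n) ^ 2 <= hhat n <= C * INR (p n) ^ 2).
{ intro n. fold (P n). assert (H1 := Hsm n). assert (H2 := Hsq n). assert (H3 := HP n).
  assert (E : hhat n = lam^2 * P n ^2 * (/ (sm n * P n) * / (sm n * P n) + / (sq n * P n) * / (sq n * P n)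
                 + rho lam * (/ (sm n * P n) + / (sq n * P n)))).
  { unfold hhat, hhat_i. fold (P n). fold (sm n). fold (sq n). field. lra. }
  rewrite E. set (x := / (sm n * P n)). set (y := / (sq n * P n)).
  assert (Hx : /b <= x <= /a).
  { specialize (Hgm n). unfold x. split; apply Rinv_le_contravar; nra. }
  assert (Hy : /b <= y <= /a).
  { specialize (Hgq n). unfold y. split; apply Rinv_le_contravar; nra. }
  assert (HL2 : 0 <= lam^2 * P n ^2) by (apply Rmult_le_pos; apply pow2_ge_0).
  unfold c, C. split.
  - replace (lam ^ 2 * (/ b * / b + / b * / b + rho lam * (/ b + / b)) * P n ^ 2)
      with (lam^2 * P n ^2 * (/ b * / b + / b * / b + rho lam * (/ b + / b))) by ring.
    apply Rmult_le_compat_l; [exact HL2|]. nra.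
  - replace (lam ^ 2 * (/ a * / a + / a * / a + rho lam * (/ a + / a)) * P n ^ 2)
      with (lam^2 * P n ^2 * (/ a * / a + / a * / a + rho lam * (/ a + / a))) by ring.
    apply Rmult_le_compat_l; [exact HL2|]. nra. }
split; [exact Part1|]. split.
{ exists c, C. split; [exact Hc|]. split; [exact HC| exact Hbnd]. }
apply (Un_cv_ext (fun n => 1 + (hh n - hhat n) / INR (p n) ^ 2 * (INR (p n) ^ 2 / hhat n))).
{ intro n. destruct (Hbnd n) as [B1 _]. assert (H3 := HP n). unfold P in H3.
  assert (0 < hhat n) by (assert (0 < c * INR (p n) ^2) by (apply Rmult_lt_0_compat; [exact Hc| apply pow_lt; exact H3]); lra).
  field. split; lra. }
apply cv_shift. apply (cv0_bdd _ _ (/ c) Part1). intro n.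
destruct (Hbnd n) as [B1 _]. assert (H3 := HP n). unfold P in H3.
assert (Hq : 0 < c * INR (p n) ^2) by (apply Rmult_lt_0_compat; [exact Hc| apply pow_lt; exact H3]).
assert (Hh : 0 < hhat n) by lra.
assert (Hp2 : 0 < INR (p n) ^ 2) by (apply pow_lt; exact H3).
assert (Hw : 0 < INR (p n) ^ 2 / hhat n) by (apply Rdiv_lt_0_compat; assumption).
rewrite Rabs_pos_eq by lra.
apply Rle_trans with (INR (p n) ^ 2 / (c * INR (p n) ^ 2)).
- unfold Rdiv. apply (Rmult_le_compat_l (INR (p n) ^ 2)); [left; exact Hp2|]. apply Rinv_le_contravar; lra.
- right. field. split; lra.
Qed.
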